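(* Let $\Omega\subseteq\mathbb{R}^n$ be a bounded open set with Lipschitz boundary and let $f:\mathbb{R}^{N\times n}\to\mathbb{R}$ be a Borel measurable function which is strong Morrey quasiconvex in $\Omega$. Then $f$ is lower semicontinuous.
   Context: For a bounded open set $\Omega\subseteq\mathbb{R}^n$ with Lipschitz boundary, a Borel measurable $f:\mathbb{R}^{N\times n}\to\mathbb{R}$ is strong Morrey quasiconvex in $\Omega$ if: for every $\varepsilon>0$, every $\xi\in\mathbb{R}^{N\times n}$ and every $K>0$ there exists $\delta=\delta(\varepsilon,K,\xi)>0$ such that for every $\varphi\in W^{1,\infty}(\Omega;\mathbb{R}^N)$ (identified with its Lipschitz representative, continuous on $\overline\Omega$) with $\|D\varphi\|_{L^\infty(\Omega)}\le K$ and $\max_{x\in\partial\Omega}|\varphi(x)|\le\delta$ one has $f(\xi)\le\operatorname{ess\,sup}_{x\in\Omega}f(\xi+D\varphi(x))+\varepsilon$. *)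

(* Defs.v *)
From HB Require Import structures.
From mathcomp Require Import all_boot all_order all_algebra.
From mathcomp Require Import all_classical all_reals all_analysis.
Set Implicit Arguments. Unset Strict Implicit. Unset Printing Implicit Defensive.
Import Order.TTheory GRing.Theory Num.Theory.
Import numFieldNormedType.Exports.
Local Open Scope classical_set_scope.
Local Open Scope ring_scope.

Definition enorm {R : realType} {N : nat} (v : 'rV[R]_N) : R :=
  Num.sqrt (\sum_(i < N) v 0 i ^+ 2).
Definition fnorm {R : realType} {N n : nat} (A : 'M[R]_(N, n)) : R :=
  Num.sqrt (\sum_(i < N) \sum_(j < n) A i j ^+ 2).

Definition box_vol {R : realType} {n : nat} (a b : 'rV[R]_n) : R :=
  \prod_(i < n) (b 0 i - a 0 i).
Definition in_box {R : realType} {n : nat} (a b : 'rV[R]_n) (x : 'rV[R]_n) : Prop :=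
  forall i : 'I_n, a 0 i <= x 0 i <= b 0 i.

Definition lebesgue_null {R : realType} {n : nat} (A : set 'rV[R]_n) : Prop :=
  forall eps : R, 0 < eps ->
  exists a b : nat -> 'rV[R]_n,
    (forall k (i : 'I_n), a k 0 i <= b k 0 i) /\
    (forall x, A x -> exists k, in_box (a k) (b k) x) /\
    (forall m, \sum_(k < m) box_vol (a k) (b k) <= eps).

Definition ess_sup_on {R : realType} {n : nat} (Omega : set 'rV[R]_n)
  (g : 'rV[R]_n -> \bar R) : \bar R :=
  ereal_inf [set t : \bar R | lebesgue_null [set x | Omega x /\ (t < g x)%E]].

Definition borel_measurable {T U : topologicalType} (f : T -> U) : Prop :=
  forall B : set U, <<s open >> B -> <<s open >> (f @^-1` B).

Definition bounded_set_rV {R : realType} {n : nat} (Omega : set 'rV[R]_n) : Prop :=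
  exists M : R, forall x, Omega x -> `|x| <= M.

Definition bdry {R : realType} {n : nat} (Omega : set 'rV[R]_n) : set 'rV[R]_n :=
  closure Omega `\` interior Omega.

(* Lipschitz boundary: near each boundary point, after a rigid change of
   coordinates, Omega is the strict supergraph of a Lipschitz function of the
   remaining n-1 coordinates. *)
Definition lipschitz_boundary {R : realType} {n : nat} (Omega : set 'rV[R]_n) : Prop :=
  forall x0, bdry Omega x0 ->
  exists (U : set 'rV[R]_n) (Q : 'M[R]_n) (j : 'I_n) (gam : 'rV[R]_n -> R),
    [/\ open U /\ U x0, Q *m Q^T = 1%:M,
        (exists L : R, forall y z, `|gam y - gam z| <= L * `|y - z|),
        (forall y (t : R), gam (y + t *: delta_mx 0 j) = gam y) &
        (forall x, U x ->
           (Omega x <-> gam ((x - x0) *m Q) < ((x - x0) *m Q) 0 j))].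

(* The gradient D phi (x) in R^{N x n}: (D phi(x))_{ij} = d phi_i / d x_j. *)
Definition grad {R : realType} {n N : nat} (phi : 'rV[R]_n -> 'rV[R]_N)
  (x : 'rV[R]_n) : 'M[R]_(N, n) := ('J phi x)^T.

(* phi is (the Lipschitz representative, continuous on the closure, of) an
   element of W^{1,oo}(Omega;R^N) with ||D phi||_{L^oo(Omega)} <= K. *)
Definition W1inf_bounded {R : realType} {n N : nat} (Omega : set 'rV[R]_n)
  (phi : 'rV[R]_n -> 'rV[R]_N) (K : R) : Prop :=
  [/\ {within closure Omega, continuous phi},
      (exists M : R, forall x, Omega x -> enorm (phi x) <= M),
      (forall x, Omega x -> exists2 r : R, 0 < r & exists L : R,
          forall y z, ball x r y -> ball x r z ->
            `|phi y - phi z| <= L * `|y - z|) &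
      lebesgue_null [set x | Omega x /\
          ~ (differentiable phi x /\ fnorm (grad phi x) <= K)]].

Definition strong_morrey_qc {R : realType} {n N : nat} (Omega : set 'rV[R]_n)
  (f : 'M[R]_(N, n) -> R) : Prop :=
  forall (eps : R), 0 < eps -> forall (xi : 'M[R]_(N, n)) (K : R), 0 < K ->
  exists2 delta : R, 0 < delta &
    forall phi : 'rV[R]_n -> 'rV[R]_N,
      W1inf_bounded Omega phi K ->
      (forall x, bdry Omega x -> enorm (phi x) <= delta) ->
      ((f xi)%:E <= ess_sup_on Omega (fun x => (f (xi + grad phi x))%:E) + eps%:E)%E.

(* Main.v *)
Set Warnings "-notation-overridden,-ambiguous-paths,-notation-incompatible-prefix".
Require Import Defs.
From HB Require Import structures.
From mathcomp Require Import all_boot all_order all_algebra.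
From mathcomp Require Import all_classical all_reals all_analysis.
From mathcomp Require Import lra.
Import Order.TTheory GRing.Theory Num.Theory.
Import numFieldNormedType.Exports.
Local Open Scope classical_set_scope.
Local Open Scope ring_scope.
Lemma norm_mxE (R: realType) m k (A: 'M[R]_(m,k)) :
  `|A| = \big[Num.max/0]_ij `|A ij.1 ij.2|.
Proof. exact: mx_normrE. Qed.
Lemma entry_le (R: realType) m k (A: 'M[R]_(m,k)) i j : `|A i j| <= `|A|.
Proof.
rewrite norm_mxE.
exact: (@le_bigmax _ _ _ 0 (fun ij : 'I_m * 'I_k => `|A ij.1 ij.2|) (i, j)).
Qed.
Lemma entries_le (R: realType) m k (A: 'M[R]_(m,k)) (c : R) : 0 <= c ->
  (forall i j, `|A i j| <= c) -> `|A| <= c.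
Proof.
move=> c0 H; rewrite norm_mxE.
by apply/bigmax_leP; split => //= ij _; apply: H.
Qed.
Lemma mulmx_entry_le (R: realType) p q r (x : 'M[R]_(p,q)) (B : 'M[R]_(q,r)) i j :
  `|(x *m B) i j| <= q%:R * (`|x| * `|B|).
Proof.
rewrite mxE; apply: (le_trans (ler_norm_sum _ _ _)).
rewrite -[q in q%:R]card_ord -sumr_const mulr_suml.
apply: ler_sum => k _; rewrite mul1r normrM.
by apply: ler_pM => //; apply: entry_le.
Qed.
Lemma mulmx_norm_le (R: realType) p q r (x : 'M[R]_(p,q)) (B : 'M[R]_(q,r)) :
  `|x *m B| <= q%:R * (`|x| * `|B|).
Proof.
apply: entries_le; first by rewrite !mulr_ge0.
by move=> i j; apply: mulmx_entry_le.
Qed.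
Lemma sqrt_sum_le (R: realType) (I : finType) (F : I -> R) (c : R) : 0 <= c ->
  (forall i, `|F i| <= c) -> Num.sqrt (\sum_i F i ^+ 2) <= #|I|%:R * c.
Proof.
move=> c0 H.
have k0 : 0 <= #|I|%:R * c :> R by rewrite mulr_ge0.
rewrite -(ger0_norm k0) -sqrtr_sqr ler_sqrt; last by rewrite sqr_ge0.
apply: (@le_trans _ _ (\sum_(i : I) c ^+ 2)).
  apply: ler_sum => i _; rewrite -real_normK ?num_real //.
  by rewrite lerXn2r ?nnegrE.
rewrite sumr_const.
rewrite (@eq_card _ _ I) //.
rewrite -[c ^+ 2 *+ _]mulr_natl exprMn ler_wpM2r ?sqr_ge0 //.
case: #|I| => [|k]; first by rewrite expr0n.
by rewrite expr2 ler_peMl // ler1n.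
Qed.
Lemma enorm_le (R: realType) N (v : 'rV[R]_N) (c : R) : 0 <= c ->
  (forall i, `|v 0 i| <= c) -> enorm v <= N%:R * c.
Proof.
by move=> c0 H; rewrite /enorm -[N in N%:R]card_ord; apply: sqrt_sum_le.
Qed.
Lemma fnorm_le (R: realType) N n (A : 'M[R]_(N,n)) (c : R) : 0 <= c ->
  (forall i j, `|A i j| <= c) -> fnorm A <= (N * n)%:R * c.
Proof.
move=> c0 H; rewrite /fnorm pair_big /=.
have -> : (N * n)%N = #|{: 'I_N * 'I_n}| by rewrite card_prod !card_ord.
by apply: sqrt_sum_le => // -[i j].
Qed.
Lemma mulmx_cont (R: realType) n N (B : 'M[R]_(n,N)) :
  continuous (fun x : 'rV[R]_n => x *m B).
Proof.
move=> x; apply/(@cvgrPdist_lt _ _ _ (nbhs x)) => e e_gt0.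
have L0 : 0 < n%:R * `|B| + 1 :> R by rewrite ltr_pwDr // mulr_ge0.
have := @cvgr_dist_lt _ _ _ (nbhs x) _ id x (@cvg_id _ (nbhs x)) (e / (n%:R * `|B| + 1)).
rewrite divr_gt0 // => /(_ _ isT); apply: filterS => z /= hz.
rewrite -mulmxBl.
have h1 := @mulmx_norm_le R 1 n N (x - z) B.
apply: (le_lt_trans h1).
have h2 : `|x - z| * (n%:R * `|B| + 1) < e by rewrite -ltr_pdivlMr.
apply: le_lt_trans h2.
by rewrite mulrCA ler_wpM2l // lerDl.
Qed.
Lemma mulmx_grad (R: realType) n N (B : 'M[R]_(n,N)) x :
  differentiable (fun x : 'rV[R]_n => x *m B) x /\
  grad (fun x : 'rV[R]_n => x *m B) x = B^T.
Proof.
have c : continuous (mulmxr B : 'rV[R]_n -> _) := @mulmx_cont R n N B.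
split; first exact: (linear_differentiable (f := mulmxr B) x c).
rewrite /grad /jacobian; congr (_ ^T).
have -> : 'd (fun x : 'rV[R]_n => x *m B) x = mulmxr B :> (_ -> _).
  exact: (diff_lin (f := mulmxr B) x c).
by apply/row_matrixP => i; rewrite !rowE mul_rV_lin1.
Qed.
Lemma null_empty (R: realType) n (A : set 'rV[R]_n) : (0 < n)%N ->
  (forall x, ~ A x) -> lebesgue_null A.
Proof.
move=> n0 hA eps eps0; exists (fun=> 0), (fun=> 0); split => //; split.
  by move=> x /hA.
move=> m; rewrite big1 ?ltW // => k _.
rewrite /box_vol (eq_bigr (fun=> 0)); last by move=> i _; rewrite !mxE subrr.
by rewrite prodr_const card_ord expr0n gtn_eqF.
Qed.

Lemma trmx_norm (R: realType) p q (A : 'M[R]_(p,q)) : `|A^T| <= `|A|.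
Proof. by apply: entries_le => // i j; rewrite mxE entry_le. Qed.
Theorem mainTheorem2 (R : realType) (n N : nat) (Omega : set 'rV[R]_n)
  (f : 'M[R]_(N, n) -> R) :
  open Omega -> bounded_set_rV Omega -> lipschitz_boundary Omega ->
  borel_measurable f -> strong_morrey_qc Omega f ->
  lower_semicontinuous (fun xi => (f xi)%:E).
Proof.
move=> _ [M hM] _ _ hqc xi a ha.
have [n0|n0] := posnP n.
  subst n; exists setT; first exact: filterT.
  by move=> y _; rewrite (thinmx0 y) -(thinmx0 xi).
have afx : a < f xi by rewrite -lte_fin.
set eps := (f xi - a) / 2.
have eps0 : 0 < eps by rewrite divr_gt0 // subr_gt0.
have [delta d0 hd] := hqc eps eps0 xi 1 ltr01.
set m1 := `|M| + 1.
have m1ge : 1 <= m1 by rewrite lerDr.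
set P := (N%:R + 1) * (n%:R + 1) * m1.
have P0 : 0 < P by rewrite !mulr_gt0 // ?ltr_wpDl // (lt_le_trans ltr01).
set r := Num.min delta 1 / P.
have r0 : 0 < r by rewrite divr_gt0 // lt_min d0 ltr01.
exists (ball xi r); first exact: nbhsx_ballx.
move=> eta; rewrite -ball_normE /= distrC => hA.
set A := eta - xi in hA.
set phi := fun x : 'rV[R]_n => x *m A^T.
have At : `|A^T| <= `|A| := @trmx_norm R N n A.
have tP : `|A| * P <= Num.min delta 1 by rewrite -ler_pdivlMr // ltW.
have Ngt : forall t : R, 0 <= t -> t <= m1 ->
    N%:R * (n%:R * (t * `|A^T|)) <= `|A| * P.
  move=> t t0 tm.
  rewrite [`|A| * _]mulrC /P [X in X <= _]mulrA [X in X <= _]mulrA.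
  rewrite ler_pM // ?mulr_ge0 //.
  rewrite ler_pM // ?mulr_ge0 //.
  by rewrite ler_pM // lerDl.
have gradE : forall x, differentiable phi x /\ grad phi x = A.
  move=> x; have [? ->] := @mulmx_grad R n N A^T x; split => //.
  by rewrite trmxK.
have fA : fnorm A <= 1.
  apply: (le_trans (@fnorm_le R N n A `|A| _ _)) => //.
    by move=> i j; apply: entry_le.
  apply: (le_trans _ (le_trans tP _)); last by rewrite ge_min lexx orbT.
  rewrite /P -mulrA mulrC ler_pM // ?mulr_ge0 // natrM ler_pM //.
    by rewrite lerDl.
  by rewrite -[X in X <= _]mulr1 ler_pM // lerDl.
have W : W1inf_bounded Omega phi 1.
  split.
  - exact/continuous_subspaceT/(@mulmx_cont R n N A^T).
  - exists (N%:R * (n%:R * (m1 * `|A^T|))) => x Ox.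
    apply: enorm_le.
      by rewrite !mulr_ge0 // (le_trans ler01).
    move=> i; apply: (le_trans (mulmx_entry_le R 1 n N x A^T 0 i)).
    rewrite ler_pM // ler_pM //.
    by rewrite (le_trans (hM _ Ox)) // (le_trans (ler_norm M)) // lerDl.
  - move=> x _; exists 1 => //; exists (n%:R * `|A^T|) => y z _ _.
    rewrite /phi -mulmxBl; apply: (le_trans (mulmx_norm_le R 1 n N (y - z) A^T)).
    by rewrite [`|y - z| * _]mulrC mulrA.
  - apply: (@null_empty R n _ n0) =>  x [_ []]; have [? ->] := gradE x; split => //.
have bd : forall x, bdry Omega x -> enorm (phi x) <= delta.
  move=> x [cx _].
  have [y [Oy bxy]] := cx _ (nbhsx_ballx x 1 ltr01).
  have xm : `|x| <= m1.
    move: bxy; rewrite -ball_normE /= => bxy.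
    have -> : x = (x - y) + y by rewrite subrK.
    apply: (le_trans (ler_normD _ _)); rewrite /m1 addrC lerD //.
      by rewrite (le_trans (hM _ Oy)) // ler_norm.
    exact: ltW.
  apply: le_trans (@enorm_le R N _ (n%:R * (`|x| * `|A^T|)) _ _) _.
  - by rewrite !mulr_ge0.
  - by move=> i; apply: (mulmx_entry_le R 1 n N x A^T 0 i).
  apply: (le_trans (Ngt _ _ xm)) => //.
  by apply: le_trans tP _; rewrite ge_min lexx.
have := hd phi W bd.
have ess : (ess_sup_on Omega (fun x => (f (xi + grad phi x))%:E) <= (f eta)%:E)%E.
  apply: ereal_inf_lbound; apply: (@null_empty R n _ n0) =>  x [_].
  by have [_ ->] := gradE x; rewrite /A addrC subrK ltxx.
move=> h1; have := le_trans h1 (leeD2r eps%:E ess).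
rewrite -EFinD lee_fin => h2.
rewrite lte_fin.
have e2 : eps * 2 = f xi - a by rewrite /eps divfK // pnatr_eq0.
lra.
Qed.
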